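(* Consider the LQ tracking problem minimizing $\frac12\sum_{t=0}^{N-1}\big[(x_t-\theta_t)^\top Q_t(x_t-\theta_t)+u_t^\top R_tu_t\big]+\frac12(x_N-\theta_N)^\top Q_N(x_N-\theta_N)$ subject to $x_{t+1}=Ax_t+Bu_t$, $x_0=0$, with $(A,B)$ controllable, $Q_t\in\mathcal Q$, $R_t\in\mathcal R$ ($0\le t\le N-1$), $Q_N\in\mathcal P$, and $\|\theta_t\|\le\bar\theta$ for all $t$. Then there is $\bar x$, independent of $t$, $N$ and $W$ (depending only on $A,B,\mu_f,l_f,\mu_g,l_g,\bar\theta$), such that the optimal states satisfy $\|x^*_t\|\le\bar x$ for all $0\le t\le N$.
   Context: Fix $\mu_f,\mu_g>0$, $0<l_f,l_g<\infty$. $P^e(Q,R)$ denotes the positive definite solution of the DARE $P=Q+A^\top(P-PB(B^\top PB+R)^{-1}B^\top P)A$. $\mathcal Q=\{Q:\mu_fI_n\le Q\le l_fI_n\}$, $\mathcal R=\{R:\mu_gI_m\le R\le l_gI_m\}$, $\bar P=P^e(l_fI_n,l_gI_m)$, $\underline P=P^e(\mu_fI_n,\mu_gI_m)$, $\mathcal P=\{P:\underline P\le P\le\bar P\}$ (Loewner order). *)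

(* Defs.v *)
From HB Require Import structures.
From mathcomp Require Import all_boot all_order all_algebra.
Set Implicit Arguments. Unset Strict Implicit. Unset Printing Implicit Defensive.
Import Order.TTheory GRing.Theory Num.Theory.
Local Open Scope ring_scope.

Section Defs.
Variable R : rcfType.

Definition qform n (M : 'M[R]_n) (x : 'cV[R]_n) : R := (x^T *m M *m x) 0 0.

Definition vnorm n (x : 'cV[R]_n) : R := Num.sqrt ((x^T *m x) 0 0).

Definition sym n (M : 'M[R]_n) : Prop := M^T = M.

Definition loewner_le n (M1 M2 : 'M[R]_n) : Prop :=
  forall x : 'cV[R]_n, qform M1 x <= qform M2 x.

Definition posdef n (M : 'M[R]_n) : Prop :=
  sym M /\ forall x : 'cV[R]_n, x != 0 -> 0 < qform M x.

Definition controllable n m (A : 'M[R]_n) (B : 'M[R]_(n, m)) : Prop :=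
  \rank (\mxrow_(k < n) (A ^+ k *m B)) = n.

Definition DARE_pd_sol n m (A : 'M[R]_n) (B : 'M[R]_(n, m))
    (Q : 'M[R]_n) (Rw : 'M[R]_m) (P : 'M[R]_n) : Prop :=
  posdef P /\
  P = Q + A^T *m (P - P *m B *m invmx (B^T *m P *m B + Rw) *m B^T *m P) *m A.

(* sets \mathcal Q, \mathcal R, \mathcal P (matrices symmetric) *)
Definition in_box n (lo hi : 'M[R]_n) (M : 'M[R]_n) : Prop :=
  sym M /\ loewner_le lo M /\ loewner_le M hi.

Fixpoint traj n m (A : 'M[R]_n) (B : 'M[R]_(n, m)) (u : nat -> 'cV[R]_m)
    (t : nat) : 'cV[R]_n :=
  match t with
  | 0 => 0
  | t'.+1 => A *m traj A B u t' + B *m u t'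
  end.

Definition track_cost n m (A : 'M[R]_n) (B : 'M[R]_(n, m)) (N : nat)
    (Q : nat -> 'M[R]_n) (Rw : nat -> 'M[R]_m) (QN : 'M[R]_n)
    (theta : nat -> 'cV[R]_n) (u : nat -> 'cV[R]_m) : R :=
  let x := traj A B u in
  2^-1 * (\sum_(t < N) (qform (Q t) (x t - theta t) + qform (Rw t) (u t)))
  + 2^-1 * qform QN (x N - theta N).

Definition optimal_input n m (A : 'M[R]_n) (B : 'M[R]_(n, m)) (N : nat)
    (Q : nat -> 'M[R]_n) (Rw : nat -> 'M[R]_m) (QN : 'M[R]_n)
    (theta : nat -> 'cV[R]_n) (u : nat -> 'cV[R]_m) : Prop :=
  forall v : nat -> 'cV[R]_m,
    track_cost A B N Q Rw QN theta u <= track_cost A B N Q Rw QN theta v.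

End Defs.

(* Main.v *)
Require Import Defs.
From mathcomp Require Import all_boot all_order all_algebra.
From mathcomp Require Import ring lra zify.
Import Order.TTheory GRing.Theory Num.Theory.
Local Open Scope ring_scope.
Set Implicit Arguments. Unset Strict Implicit.


Section Basics.
Variable R : rcfType.

Definition dot k (x y : 'cV[R]_k) : R := (x^T *m y) 0 0.
Definition nrm2 k (x : 'cV[R]_k) : R := dot x x.

Lemma dotE k (x y : 'cV[R]_k) : dot x y = \sum_i x i 0 * y i 0.
Proof. by rewrite /dot mxE; apply: eq_bigr => i _; rewrite mxE. Qed.

Lemma nrm2E k (x : 'cV[R]_k) : nrm2 x = \sum_i x i 0 ^+ 2.
Proof. by rewrite /nrm2 dotE; apply: eq_bigr => i _; rewrite expr2. Qed.

Lemma nrm2_ge0 k (x : 'cV[R]_k) : 0 <= nrm2 x.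
Proof. by rewrite nrm2E; apply: sumr_ge0 => i _; apply: sqr_ge0. Qed.

Lemma nrm20 k : nrm2 (0 : 'cV[R]_k) = 0.
Proof. by rewrite nrm2E big1 // => i _; rewrite mxE expr0n. Qed.

Lemma nrm2N k (x : 'cV[R]_k) : nrm2 (- x) = nrm2 x.
Proof. by rewrite !nrm2E; apply: eq_bigr => i _; rewrite mxE sqrrN. Qed.

Lemma dot_le k (x y : 'cV[R]_k) : dot x y <= 2^-1 * (nrm2 x + nrm2 y).
Proof.
rewrite dotE !nrm2E -big_split /= mulr_sumr; apply: ler_sum => i _.
have := sqr_ge0 (x i 0 - y i 0); lra.
Qed.

Lemma nrm2D k (x y : 'cV[R]_k) : nrm2 (x + y) <= 2 * (nrm2 x + nrm2 y).
Proof.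
rewrite !nrm2E -big_split /= mulr_sumr; apply: ler_sum => i _.
rewrite mxE; have := sqr_ge0 (x i 0 - y i 0); lra.
Qed.

Lemma nrm2B k (x y : 'cV[R]_k) : nrm2 (x - y) <= 2 * (nrm2 x + nrm2 y).
Proof. by rewrite -(nrm2N y) nrm2D. Qed.

Lemma coord_le k (x : 'cV[R]_k) i : x i 0 ^+ 2 <= nrm2 x.
Proof.
rewrite nrm2E (bigD1 i) //= lerDl; apply: sumr_ge0 => j _; apply: sqr_ge0.
Qed.

Lemma coord_prod_le k (x : 'cV[R]_k) i j : `|x i 0| * `|x j 0| <= nrm2 x.
Proof.
have h1 := coord_le x i; have h2 := coord_le x j.
have := sqr_ge0 (`|x i 0| - `|x j 0|).
rewrite -(real_normK (num_real (x i 0))) in h1.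
rewrite -(real_normK (num_real (x j 0))) in h2.
nra.
Qed.

Lemma sum_sq_le k (a : 'I_k -> R) (x : 'cV[R]_k) :
  (\sum_j a j * x j 0) ^+ 2 <= (\sum_j `|a j|) ^+ 2 * nrm2 x.
Proof.
have h : (\sum_j a j * x j 0) ^+ 2 <= (\sum_j `|a j| * `|x j 0|) ^+ 2.
  rewrite -[X in X <= _]real_normK ?num_real //.
  apply: lerXn2r; rewrite ?nnegrE ?normr_ge0 //.
    by apply: sumr_ge0 => j _; rewrite mulr_ge0.
  apply: (le_trans (ler_norm_sum _ _ _)); apply: ler_sum => j _.
  by rewrite normrM.
apply: (le_trans h); rewrite !expr2 -mulrA !mulr_suml; apply: ler_sum => i _.
rewrite !mulr_sumr; apply: ler_sum => j _.
rewrite mulrACA -[in X in X <= _]mulrA -subr_ge0 -mulrBr; apply: mulr_ge0 => //; rewrite -mulrBr; apply: mulr_ge0 => //; rewrite subr_ge0; exact: coord_prod_le.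
Qed.

Definition mc k l (M : 'M[R]_(k, l)) : R := \sum_i (\sum_j `|M i j|) ^+ 2.

Lemma mc_ge0 k l (M : 'M[R]_(k, l)) : 0 <= mc M.
Proof. by apply: sumr_ge0 => i _; apply: sqr_ge0. Qed.

Lemma nrm2_mul k l (M : 'M[R]_(k, l)) x : nrm2 (M *m x) <= mc M * nrm2 x.
Proof.
rewrite nrm2E /mc mulr_suml; apply: ler_sum => i _.
rewrite mxE; exact: sum_sq_le.
Qed.

Lemma qform_le k (M : 'M[R]_k) x : qform M x <= 2^-1 * (1 + mc M) * nrm2 x.
Proof.
rewrite /qform -mulmxA -/(dot x (M *m x)).
apply: (le_trans (dot_le _ _)). have := nrm2_mul M x. have := nrm2_ge0 x. nra.
Qed.

Lemma qform_scal k (c : R) (x : 'cV[R]_k) : qform (c%:M) x = c * nrm2 x.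
Proof. by rewrite /qform mul_mx_scalar -scalemxAl mxE. Qed.

Lemma box_lo k (mu l : R) (M : 'M[R]_k) x :
  in_box (mu%:M) (l%:M) M -> mu * nrm2 x <= qform M x.
Proof. by move=> [_ [h _]]; rewrite -qform_scal; apply: h. Qed.

Lemma box_hi k (mu l : R) (M : 'M[R]_k) x :
  in_box (mu%:M) (l%:M) M -> qform M x <= l * nrm2 x.
Proof. by move=> [_ [_ h]]; rewrite -qform_scal; apply: h. Qed.

Lemma vnorm_sq k (x : 'cV[R]_k) (t : R) : vnorm x <= t -> nrm2 x <= t ^+ 2.
Proof.
move=> h; have h0 : 0 <= vnorm x by apply: sqrtr_ge0.
rewrite -[nrm2 x](sqr_sqrtr (nrm2_ge0 x)).
by apply: lerXn2r; rewrite ?nnegrE //; apply: le_trans h.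
Qed.

Lemma vnorm_le k (x : 'cV[R]_k) (K : R) : nrm2 x <= K -> vnorm x <= Num.sqrt K.
Proof.
move=> h; rewrite /vnorm -/(dot x x) -/(nrm2 x).
by rewrite ler_sqrt //; apply: le_trans h; apply: nrm2_ge0.
Qed.

End Basics.


Section Ctrl.
Variable R : rcfType.
Variables n m : nat.
Variable A : 'M[R]_n.
Variable B : 'M[R]_(n, m).

Fixpoint st (z : 'cV[R]_n) (v : nat -> 'cV[R]_m) (j : nat) : 'cV[R]_n :=
  match j with 0 => z | j'.+1 => A *m st z v j' + B *m v j' end.

Lemma eq_st z v v' j : (forall i, v i = v' i) -> st z v j = st z v' j.
Proof. by move=> h; elim: j => //= j ->; rewrite h. Qed.

Lemma st_lin z1 z2 v1 v2 j :
  st (z1 + z2) (fun i => v1 i + v2 i) j = st z1 v1 j + st z2 v2 j.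
Proof.
elim: j => //= j ->; rewrite !mulmxDr; rewrite -!addrA; congr (_ + _).
by rewrite addrCA addrA [X in X + _]addrC -addrA.
Qed.

Lemma mxexpS k : A ^+ k.+1 = A *m A ^+ k.
Proof. exact: exprS. Qed.

Lemma st_zero_in z j : st z (fun _ => 0) j = A ^+ j *m z.
Proof.
elim: j => [|j IH] /=; first by rewrite expr0 mul1mx.
by rewrite IH mulmx0 addr0 mxexpS mulmxA.
Qed.

Lemma st00 j : st 0 (fun _ => 0) j = 0.
Proof. by rewrite st_zero_in mulmx0. Qed.

Lemma st_formula v j :
  st 0 v j = \sum_(i < j) A ^+ (j.-1 - i) *m B *m v i.
Proof.
elim: j => [|j IH] /=; first by rewrite big_ord0.
rewrite IH big_ord_recr /= subnn expr0 mul1mx mulmx_sumr; congr (_ + _).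
apply: eq_bigr => i _; rewrite !mulmxA -mxexpS; congr (_ ^+ _ *m _ *m _).
case: i => i /= hi; case: j hi IH => // j hi _ /=.
by rewrite -subSn // -ltnS.
Qed.

Fixpoint Mt (M0 : 'M[R]_n) (S : nat -> 'M[R]_(m, n)) (j : nat) : 'M[R]_n :=
  match j with 0 => M0 | j'.+1 => A *m Mt M0 S j' + B *m S j' end.

Lemma st_mat M0 S z v j : (forall i, v i = S i *m z) -> st (M0 *m z) v j = Mt M0 S j *m z.
Proof.
move=> h; elim: j => [|j IH] //=.
by rewrite IH h mulmxDl !mulmxA.
Qed.

Lemma st_tail z v j0 j : (forall i, (j0 <= i)%N -> v i = 0) -> st z v j0 = 0 ->
  (j0 <= j)%N -> st z v j = 0.
Proof.
move=> hv h0; elim: j => [|j IH]; first by rewrite leqn0 => /eqP e; move: h0; rewrite e.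
rewrite leq_eqVlt => /orP [/eqP e | hj] /=; first by move: h0; rewrite e.
by rewrite IH // hv // !mulmx0 addr0.
Qed.

End Ctrl.


Section Reach.
Variable R : rcfType.
Variables n m : nat.
Variable A : 'M[R]_n.
Variable B : 'M[R]_(n, m).

Definition Ctrl := \mxrow_(k < n) (A ^+ k *m B).
Definition Ymx := (pinvmx (Ctrl^T))^T.

Lemma CY : controllable A B -> Ctrl *m Ymx = 1%:M.
Proof.
move=> hc.
have hf : row_full (Ctrl^T) by rewrite /row_full mxrank_tr hc.
have := mulmxKpV (submx_full (1%:M : 'M[R]_n) hf).
rewrite mul1mx => h.
by apply: trmx_inj; rewrite /Ymx trmx_mul trmxK h trmx1.
Qed.

Definition Sr (i : nat) : 'M[R]_(m, n) :=
  match (insub (n.-1 - i)%N : option 'I_n) with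
  | Some k => if (i < n)%N then submxcol Ymx k else 0
  | None => 0 end.

Definition reach (z : 'cV[R]_n) (i : nat) : 'cV[R]_m := Sr i *m z.

Lemma reach_ge z i : (n <= i)%N -> reach z i = 0.
Proof.
move=> h; rewrite /reach /Sr; case: insubP => [k _ _|_]; last by rewrite mul0mx.
by rewrite ltnNge h mul0mx.
Qed.

Lemma reach_ord z (k : 'I_n) : reach z (n.-1 - k) = submxcol (Ymx *m z) k.
Proof.
have hk := ltn_ord k.
have e : (n.-1 - (n.-1 - k) = k)%N.
  by rewrite subKn // -ltnS prednK //; apply: leq_ltn_trans hk.
rewrite /reach /Sr e; case: insubP => [k' _ ek|]; last by rewrite ltn_ord.
have -> : k' = k by apply: val_inj.
have -> : (n.-1 - k < n)%N.
  by apply: leq_ltn_trans (leq_subr _ _) _; rewrite prednK //; apply: leq_ltn_trans hk.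
by rewrite submxcol_mul.
Qed.

Lemma st_reach z : controllable A B -> st A B 0 (reach z) n = z.
Proof.
move=> hc; rewrite st_formula.
rewrite (reindex_inj rev_ord_inj) /=.
transitivity (\sum_(k < n) A ^+ k *m B *m submxcol (Ymx *m z) k).
  apply: eq_bigr => k _.
  have hk := ltn_ord k.
  have e1 : (n.-1 - rev_ord k = k)%N by rewrite /=; lia.
  have e2 : (n - k.+1 = n.-1 - k)%N by lia.
  by rewrite e1 e2 reach_ord.
rewrite -mul_mxrow_mxcol submxcolK mulmxA; have := CY hc; rewrite /Ctrl => ->; exact: mul1mx.
Qed.

End Reach.


Lemma pick_le (R : rcfType) (n : nat) (F : 'I_n -> R) j (hj : (j < n)%N) : (forall k, 0 <= F k) ->
  F (Ordinal hj) <= \sum_(k < n) F k.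
Proof.
move=> h; rewrite (bigD1 (Ordinal hj)) //= lerDl; apply: sumr_ge0 => k _; exact: h.
Qed.

Section Bridge.
Variable R : rcfType.
Variables n m : nat.
Variable A : 'M[R]_n.
Variable B : 'M[R]_(n, m).

Definition Sd i : 'M[R]_(m, n) := Sr A B i *m (- A ^+ n).
Definition dd (z0 : 'cV[R]_n) (i : nat) : 'cV[R]_m := Sd i *m z0.
Definition ee (L : nat) (z1 : 'cV[R]_n) (i : nat) : 'cV[R]_m :=
  if (L - n <= i)%N then reach A B z1 (i - (L - n)) else 0.
Definition bv L z0 z1 i := dd z0 i + ee L z1 i.

Lemma dd_reach z0 i : dd z0 i = reach A B (- (A ^+ n *m z0)) i.
Proof. by rewrite /dd /reach /Sd -mulmxA mulNmx. Qed.

Lemma st_bv L z0 z1 j :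
  st A B z0 (bv L z0 z1) j = st A B z0 (dd z0) j + st A B 0 (ee L z1) j.
Proof. by rewrite -st_lin addr0. Qed.

Lemma st_ee L z1 j : st A B 0 (ee L z1) j = st A B 0 (reach A B z1) (j - (L - n)).
Proof.
elim: j => [|j IH]; first by rewrite sub0n.
rewrite /= IH /ee; case: leqP => h.
  by rewrite subSn //.
have -> : (j.+1 - (L - n) = 0)%N by lia.
have -> : (j - (L - n) = 0)%N by lia.
by rewrite /= !mulmx0 addr0.
Qed.

Lemma dd_ge z0 i : (n <= i)%N -> dd z0 i = 0.
Proof. by move=> h; rewrite dd_reach reach_ge. Qed.

Lemma st_dd_n z0 : controllable A B -> st A B z0 (dd z0) n = 0.
Proof.
move=> hc.
have -> : st A B z0 (dd z0) n = st A B (z0 + 0) (fun i => 0 + dd z0 i) n.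
  by rewrite addr0; apply: eq_st => i; rewrite add0r.
rewrite st_lin st_zero_in (eq_st _ _ _ _ (dd_reach z0)) st_reach //.
by rewrite subrr.
Qed.

Lemma st_dd_tail z0 j : controllable A B -> (n <= j)%N -> st A B z0 (dd z0) j = 0.
Proof. by move=> hc hj; apply: (st_tail (j0 := n)) => //; [exact: dd_ge | exact: st_dd_n]. Qed.

Lemma bv_end L z0 z1 : controllable A B ->
  ((n <= L)%N \/ (z0 = 0 /\ z1 = 0)) -> st A B z0 (bv L z0 z1) L = z1.
Proof.
move=> hc [hL | [-> ->]].
  rewrite st_bv st_dd_tail // add0r st_ee.
  have -> : (L - (L - n) = n)%N by lia.
  by rewrite st_reach.
rewrite (@eq_st _ _ _ A B 0 _ (fun _ => 0) L) ?st00 // => i.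
by rewrite /bv /dd /ee /reach !mulmx0 add0r if_same.
Qed.

Definition K1 := \sum_(j < n) mc (Mt A B 1%:M Sd j).
Definition K2 := \sum_(j < n) mc (Sd j).
Definition K3 := \sum_(j < n) mc (Mt A B 0 (Sr A B) j).
Definition K4 := \sum_(j < n) mc (Sr A B j).



Lemma K_ge0 : 0 <= K1 /\ 0 <= K2 /\ 0 <= K3 /\ 0 <= K4.
Proof. by split; [|split; [|split]]; apply: sumr_ge0 => k _; apply: mc_ge0. Qed.

Lemma bnd_dd_st z0 j : controllable A B ->
  nrm2 (st A B z0 (dd z0) j) <= (j < n)%N%:R * K1 * nrm2 z0.
Proof.
move=> hc; case: (ltnP j n) => hj.
  have -> : st A B z0 (dd z0) j = Mt A B 1%:M Sd j *m z0.
    by rewrite -{1}[z0]mul1mx; apply: st_mat.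
  rewrite mul1r; apply: le_trans (nrm2_mul _ _) _; apply: ler_wpM2r; first exact: nrm2_ge0.
  by apply: (@pick_le R n (fun k : 'I_n => mc (Mt A B 1%:M Sd k)) _ hj) => k; apply: mc_ge0.
by rewrite st_dd_tail // nrm20 mul0r mul0r.
Qed.

Lemma bnd_dd z0 j : nrm2 (dd z0 j) <= (j < n)%N%:R * K2 * nrm2 z0.
Proof.
case: (ltnP j n) => hj.
  rewrite mul1r; apply: le_trans (nrm2_mul _ _) _; apply: ler_wpM2r; first exact: nrm2_ge0.
  by apply: (@pick_le R n (fun k : 'I_n => mc (Sd k)) _ hj) => k; apply: mc_ge0.
by rewrite dd_ge // nrm20 mul0r mul0r.
Qed.

Lemma bnd_ee_st L z1 j : (j < L)%N ->
  nrm2 (st A B 0 (ee L z1) j) <= (L - n <= j)%N%:R * K3 * nrm2 z1.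
Proof.
move=> hjL; rewrite st_ee; case: (leqP (L - n) j) => hj.
  have hi : (j - (L - n) < n)%N by lia.
  have -> : st A B 0 (reach A B z1) (j - (L - n)) = Mt A B 0 (Sr A B) (j - (L - n)) *m z1.
    by rewrite -(mul0mx n z1); apply: st_mat.
  rewrite mul1r.
  apply: le_trans (nrm2_mul _ _) _; apply: ler_wpM2r; first exact: nrm2_ge0.
  by apply: (@pick_le R n (fun k : 'I_n => mc (Mt A B 0 (Sr A B) k)) _ hi) => k; apply: mc_ge0.
have -> : (j - (L - n) = 0)%N by lia.
by rewrite /= nrm20 !mul0r.
Qed.

Lemma bnd_ee L z1 j : (j < L)%N ->
  nrm2 (ee L z1 j) <= (L - n <= j)%N%:R * K4 * nrm2 z1.
Proof.
move=> hjL; rewrite /ee; case: (leqP (L - n) j) => hj.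
  have hi : (j - (L - n) < n)%N by lia.
  rewrite mul1r; apply: le_trans (nrm2_mul _ _) _; apply: ler_wpM2r; first exact: nrm2_ge0.
  by apply: (@pick_le R n (fun k : 'I_n => mc (Sr A B k)) _ hi) => k; apply: mc_ge0.
by rewrite nrm20 !mul0r.
Qed.

End Bridge.

Lemma count_lt (R : rcfType) (n L : nat) : \sum_(j < L) ((j < n)%N%:R : R) <= n%:R.
Proof.
suff : \sum_(j < L) ((j < n)%N%:R : R) <= (minn L n)%:R.
  by move=> h; apply: le_trans h _; rewrite ler_nat geq_minr.
elim: L => [|L IH]; first by rewrite big_ord0.
rewrite big_ord_recr /=; apply: le_trans (lerD IH (lexx _)) _.
rewrite -natrD ler_nat; case: ltnP => h; lia.
Qed.

Lemma count_ge (R : rcfType) (n L : nat) : \sum_(j < L) ((L - n <= j)%N%:R : R) <= n%:R.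
Proof.
rewrite (reindex_inj rev_ord_inj) /=; apply: le_trans (count_lt R n L).
apply: ler_sum => j _; rewrite ler_nat; have := ltn_ord j; case: ltnP; lia.
Qed.


Section WinCost.
Variable R : rcfType.
Variables n m : nat.
Variable A : 'M[R]_n.
Variable B : 'M[R]_(n, m).
Hypothesis hc : controllable A B.

Lemma win_cost L z0 z1 (Qs : nat -> 'M[R]_n) (Rs : nat -> 'M[R]_m)
    (th : nat -> 'cV[R]_n) (lf lg T : R) :
  0 <= lf -> 0 <= lg ->
  (forall j, (j < L)%N -> forall v, qform (Qs j) v <= lf * nrm2 v) ->
  (forall j, (j < L)%N -> forall v, qform (Rs j) v <= lg * nrm2 v) ->
  (forall j, (j < L)%N -> nrm2 (th j) <= T) ->
  \sum_(j < L) (qform (Qs j) (st A B z0 (bv A B L z0 z1) j - th j)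
                + qform (Rs j) (bv A B L z0 z1 j))
  <= n%:R * (4 * lf * K1 A B + 2 * lg * K2 A B) * nrm2 z0
   + n%:R * (4 * lf * K3 A B + 2 * lg * K4 A B) * nrm2 z1 + L%:R * (2 * lf * T).
Proof.
move=> hlf hlg hQ hR hT.
set n0 := nrm2 z0; set n1 := nrm2 z1.
set P := 4 * lf * K1 A B * n0 + 2 * lg * K2 A B * n0.
set Q' := 4 * lf * K3 A B * n1 + 2 * lg * K4 A B * n1.
have [k1 [k2 [k3 k4]]] := K_ge0 A B.
have hn0 : 0 <= n0 by apply: nrm2_ge0.
have hn1 : 0 <= n1 by apply: nrm2_ge0.
have hP : 0 <= P by rewrite /P; apply: addr_ge0; apply: mulr_ge0 => //; apply: mulr_ge0 => //; apply: mulr_ge0.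
have hQ' : 0 <= Q' by rewrite /Q'; apply: addr_ge0; apply: mulr_ge0 => //; apply: mulr_ge0 => //; apply: mulr_ge0.
have pw : forall j : 'I_L,
  qform (Qs j) (st A B z0 (bv A B L z0 z1) j - th j) + qform (Rs j) (bv A B L z0 z1 j)
  <= (j < n)%N%:R * P + (L - n <= j)%N%:R * Q' + 2 * lf * T.
  move=> j; have hj := ltn_ord j.
  set a := ((j < n)%N%:R : R); set b := ((L - n <= j)%N%:R : R).
  have hd := bnd_dd_st z0 j hc; have he := bnd_ee_st A B z1 hj.
  have hd2 := bnd_dd A B z0 j; have he2 := bnd_ee A B z1 hj.
  rewrite -/a -/b -/n0 -/n1 in hd he hd2 he2.
  have h1 : nrm2 (st A B z0 (bv A B L z0 z1) j - th j)
      <= 4 * (a * K1 A B * n0 + b * K3 A B * n1) + 2 * T.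
    rewrite st_bv.
    have := nrm2B (st A B z0 (dd A B z0) j + st A B 0 (ee A B L z1) j) (th j).
    have := nrm2D (st A B z0 (dd A B z0) j) (st A B 0 (ee A B L z1) j).
    have := hT j hj. lra.
  have h2 : nrm2 (bv A B L z0 z1 j) <= 2 * (a * K2 A B * n0 + b * K4 A B * n1).
    have := nrm2D (dd A B z0 j) (ee A B L z1 j).
    rewrite /bv. lra.
  apply: le_trans (lerD (hQ j hj _) (hR j hj _)) _.
  apply: le_trans (lerD (ler_wpM2l hlf h1) (ler_wpM2l hlg h2)) _.
  by rewrite /P /Q' le_eqVlt; apply/orP; left; apply/eqP; ring.
apply: le_trans (ler_sum _ (fun j _ => pw j)) _.
rewrite !big_split /= -!mulr_suml sumr_const card_ord.
have c1 := count_lt R n L; have c2 := count_ge R n L.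
have -> : n%:R * (4 * lf * K1 A B + 2 * lg * K2 A B) * n0 = n%:R * P by rewrite /P; ring.
have -> : n%:R * (4 * lf * K3 A B + 2 * lg * K4 A B) * n1 = n%:R * Q' by rewrite /Q'; ring.
apply: lerD; first by apply: lerD; apply: ler_wpM2r.
by rewrite le_eqVlt; apply/orP; left; apply/eqP; rewrite -mulr_natl; ring.
Qed.

End WinCost.


Section Hole.
Variable R : rcfType.

Lemma geo1 (r : R) K : (1 - r) * \sum_(i < K) r ^+ i = 1 - r ^+ K.
Proof.
elim: K => [|K IH]; first by rewrite big_ord0 expr0; ring.
by rewrite big_ord_recr /= mulrDr IH exprS; ring.
Qed.

Lemma geo2 (r : R) K : (1 - r) ^+ 2 * \sum_(i < K) (i.+1)%:R * r ^+ i
  = 1 - (K.+1)%:R * r ^+ K + K%:R * r ^+ K.+1.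
Proof.
elim: K => [|K IH]; first by rewrite big_ord0 !expr0; ring.
rewrite big_ord_recr /= mulrDr IH !exprS.
rewrite -[(K.+2)%:R]natr1 -[(K.+1)%:R]natr1; ring.
Qed.

Lemma geo1_le (r : R) K : 0 <= r -> r <= 1 -> (1 - r) * \sum_(i < K) r ^+ i <= 1.
Proof. by move=> h0 h1; rewrite geo1 lerBlDr lerDl exprn_ge0. Qed.

Lemma geo2_le (r : R) K : 0 <= r -> r <= 1 ->
  (1 - r) ^+ 2 * \sum_(i < K) (i.+1)%:R * r ^+ i <= 1.
Proof.
move=> h0 h1; rewrite geo2.
have hK : 0 <= r ^+ K by apply: exprn_ge0.
have hKn : 0 <= (K%:R : R) by apply: ler0n.
have hr : 0 <= 1 - r by rewrite subr_ge0.
have := mulr_ge0 (mulr_ge0 hK hr) hKn.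
rewrite exprS -[(K.+1)%:R]natr1. lra.
Qed.



Lemma powK_le (r : R) K : 0 <= r -> r <= 1 -> (K.+1)%:R * r ^+ K <= \sum_(i < K.+1) r ^+ i.
Proof.
move=> h0 h1; rewrite mulr_natl.
have -> : r ^+ K *+ K.+1 = \sum_(i < K.+1) r ^+ K by rewrite sumr_const card_ord.
apply: ler_sum => i _; apply: ler_wiXn2l => //; rewrite -ltnS; exact: ltn_ord.
Qed.

Lemma one_le_sum (y : nat -> R) a b t : (forall k, 0 <= y k) -> (a <= t < b)%N ->
  y t <= \sum_(a <= k < b) y k.
Proof.
move=> hy /andP [h1 h2]; rewrite (big_cat_nat (n:=t)) //=; last exact: ltnW.
rewrite [\sum_(t <= i < b) _]big_ltn //=.
have := @sumr_ge0 R _ (index_iota a t) xpredT y (fun k _ => hy k).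
have := @sumr_ge0 R _ (index_iota t.+1 b) xpredT y (fun k _ => hy k).
lra.
Qed.

End Hole.

Section Hole2.
Variable R : rcfType.
Variables (y : nat -> R) (N n : nat) (C D : R).
Hypotheses (hC : 1 <= C) (hD : 0 <= D) (hy : forall k, 0 <= y k) (hy0 : y 0%N = 0).
Hypothesis hW : forall a b, (a <= b <= N)%N -> ((n <= b - a)%N \/ (a = 0%N /\ b = N)) ->
  \sum_(a <= k < b.+1) y k <= C * (y a + (if (b < N)%N then y b else 0)) + D * ((b - a).+1)%:R.

Variable t : nat.
Hypothesis ht : (t <= N)%N.

Definition F r := \sum_(t - r <= k < (minn N (t + r)).+1) y k.

Let hC0 : 0 < C. Proof. exact: lt_le_trans ltr01 hC. Qed.
Let rho := 1 - C^-1.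
Let hrho0 : 0 <= rho. Proof. by rewrite /rho subr_ge0 invr_le1 // unitfE gt_eqF. Qed.
Let hrho1 : rho <= 1. Proof. by rewrite /rho lerBlDr lerDl invr_ge0 ltW. Qed.

Lemma F_step s : (n <= s)%N -> F s <= rho * F s.+1 + C^-1 * D * ((s.*2 + 3)%:R).
Proof.
move=> hs.
set a1 := (t - s.+1)%N; set a0 := (t - s)%N.
set b0 := minn N (t + s); set b1 := minn N (t + s.+1).
have e1 : F s.+1 = \sum_(a1 <= k < a0) y k + F s + \sum_(b0.+1 <= k < b1.+1) y k.
  rewrite /F -/a1 -/a0 -/b0 -/b1.
  rewrite (big_cat_nat (n := a0)) /=; [| rewrite /a1 /a0; lia | rewrite /a0 /b1; lia].
  rewrite (big_cat_nat (n := b0.+1) (m := a0)) /=; [by rewrite addrA | rewrite /a0 /b0; lia | rewrite /b0 /b1; lia].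
have hA : y a1 <= \sum_(a1 <= k < a0) y k.
  case: (ltnP a1 a0) => h.
    by apply: one_le_sum => //; rewrite leqnn h.
  have -> : a1 = 0%N by rewrite /a1 /a0 in h *; lia.
  by rewrite hy0; apply: sumr_ge0 => *.
have hB : (if (b1 < N)%N then y b1 else 0) <= \sum_(b0.+1 <= k < b1.+1) y k.
  case: ifP => h.
    by apply: one_le_sum => //; rewrite leqnn andbT /b0 /b1 in h *; lia.
  by apply: sumr_ge0 => *.
have hw := hW (a := a1) (b := b1).
have h1 : (a1 <= b1 <= N)%N by rewrite /a1 /b1; lia.
have h2 : (n <= b1 - a1)%N \/ (a1 = 0%N /\ b1 = N).
  rewrite /a1 /b1; case: (leqP (t + s.+1) N) => h; [left; lia |].
  case: (leqP s.+1 t) => h'; [left; lia | right; lia].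
have hw' := hw h1 h2.
have hF1 : \sum_(a1 <= k < b1.+1) y k = F s.+1 by [].
rewrite hF1 in hw'.
have hlen : (((b1 - a1).+1)%:R : R) <= (s.*2 + 3)%:R by rewrite ler_nat /a1 /b1; lia.
have hlen' := ler_wpM2l hD hlen.
have hCF : C * F s <= (C - 1) * F s.+1 + D * (s.*2 + 3)%:R.
  have := ler_wpM2l (ltW hC0) (lerD hA hB). rewrite e1 in hw' *. nra.
rewrite -(ler_pM2l hC0).
have -> : C * (rho * F s.+1 + C^-1 * D * (s.*2 + 3)%:R)
    = (C - 1) * F s.+1 + D * (s.*2 + 3)%:R.
  by rewrite /rho; field; rewrite gt_eqF.
exact: hCF.
Qed.

Lemma F_unroll j : F n <= rho ^+ j * F (n + j)
  + C^-1 * D * \sum_(i < j) rho ^+ i * (((n + i).*2 + 3)%:R).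
Proof.
elim: j => [|j IH]; first by rewrite expr0 mul1r addn0 big_ord0 mulr0 addr0.
apply: le_trans IH _.
have hs := F_step (s := (n + j)%N) (leq_addr _ _).
have hp : 0 <= rho ^+ j by apply: exprn_ge0.
have := ler_wpM2l hp hs.
have e : (n + j.+1 = (n+j).+1)%N by lia.
rewrite big_ord_recr /= e exprS.
nra.
Qed.

Lemma F_full : F (n + N) <= D * (N.+1)%:R.
Proof.
have e1 : (t - (n + N) = 0)%N by lia.
have e2 : minn N (t + (n + N)) = N by lia.
rewrite /F e1 e2.
have h : (0 <= N <= N)%N by rewrite leq0n leqnn.
have := hW h (or_intror (conj erefl erefl)).
by rewrite ltnn subn0 hy0 addr0 mulr0 add0r.
Qed.

Lemma hole_bound : y t <= D * C * ((n.*2 + 4)%:R).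
Proof.
have h0 : y t <= F n.
  by apply: one_le_sum => //; apply/andP; split; lia.
apply: le_trans h0 _; apply: le_trans (F_unroll N) _.
have hCi : 0 < C^-1 by rewrite invr_gt0.
have hS1 : \sum_(i < N.+1) rho ^+ i <= C.
  have := geo1_le N.+1 hrho0 hrho1.
  have -> : 1 - rho = C^-1 by rewrite /rho; ring.
  move=> h; rewrite -(ler_pM2l hCi) mulVf ?gt_eqF //.
have hS2 : \sum_(i < N) (i.+1)%:R * rho ^+ i <= C ^+ 2.
  have := geo2_le N hrho0 hrho1.
  have -> : 1 - rho = C^-1 by rewrite /rho; ring.
  move=> h; rewrite -(ler_pM2l (exprn_gt0 2 hCi)).
  by rewrite -exprMn mulVf ?gt_eqF // expr1n.
have hT1 : rho ^+ N * F (n + N) <= D * C.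
  apply: le_trans (ler_wpM2l (exprn_ge0 N hrho0) F_full) _.
  rewrite mulrCA; apply: ler_wpM2l => //; rewrite mulrC.
  exact: le_trans (powK_le N hrho0 hrho1) hS1.
have hT2 : \sum_(i < N) rho ^+ i * (((n + i).*2 + 3)%:R)
    <= (n.*2 + 3)%:R * \sum_(i < N) (i.+1)%:R * rho ^+ i.
  rewrite mulr_sumr; apply: ler_sum => i _.
  rewrite mulrA [_ * rho ^+ i]mulrC; apply: ler_wpM2l; first exact: exprn_ge0.
  by rewrite -natrM ler_nat; nia.
have hcd : 0 <= C^-1 * D by rewrite mulr_ge0 // invr_ge0 ltW.
have := ler_wpM2l hcd hT2.
have hn : 0 <= ((n.*2 + 3)%:R : R) by apply: ler0n.
have := ler_wpM2l (mulr_ge0 hcd hn) hS2.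
have e : C^-1 * D * (n.*2 + 3)%:R * C ^+ 2 = D * C * (n.*2 + 3)%:R.
  by rewrite expr2; field; rewrite gt_eqF.
rewrite e -mulrA => h1 h2.
have -> : ((n.*2 + 4)%:R : R) = (n.*2 + 3)%:R + 1 by rewrite -[1]/(1%:R) -natrD -addnA.
have : D * C * (n.*2 + 3)%:R + D * C = D * C * ((n.*2 + 3)%:R + 1) by ring.
lra.
Qed.

End Hole2.


Lemma traj_st (R : rcfType) n m (A : 'M[R]_n) (B : 'M[R]_(n, m)) v k :
  traj A B v k = st A B 0 v k.
Proof. by elim: k => //= k ->. Qed.

Section Win.
Variable R : rcfType.
Variables n m : nat.
Variable A : 'M[R]_n.
Variable B : 'M[R]_(n, m).
Variables (N : nat) (Q : nat -> 'M[R]_n) (Rw : nat -> 'M[R]_m) (QN : 'M[R]_n)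
  (theta : nat -> 'cV[R]_n) (u : nat -> 'cV[R]_m).
Variables (a b : nat).
Hypothesis hab : (a <= b <= N)%N.

Let x := traj A B u.
Let L := (b - a)%N.
Let z0 := x a.
Let z1 := if (b < N)%N then x b else 0.
Definition wv := bv A B L z0 z1.
Definition wc k := if (a <= k < b)%N then wv (k - a) else u k.

Lemma T1 k : (k <= a)%N -> traj A B wc k = x k.
Proof.
elim: k => [|k IH] h //=.
rewrite IH ?(ltnW h) // /wc; have -> : (a <= k < b)%N = false by lia.
by [].
Qed.

Lemma T2 j : (j <= L)%N -> traj A B wc (j + a) = st A B z0 wv j.
Proof.
elim: j => [|j IH] h; first by rewrite add0n T1.
rewrite addSn /= IH ?(ltnW h) // /wc.
have -> : (a <= j + a < b)%N = true by rewrite /L in h; lia.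
by rewrite addnK.
Qed.

Hypothesis hcond : (n <= L)%N \/ (a = 0%N /\ b = N).
Hypothesis hc : controllable A B.

Lemma wend : st A B z0 wv L = z1.
Proof.
apply: bv_end => //; case: hcond => [h|[ea eb]]; [by left | right].
by rewrite /z0 /z1 /x ea eb ltnn.
Qed.

Lemma T3 k : (b < N)%N -> (b <= k)%N -> traj A B wc k = x k.
Proof.
move=> hb; elim: k => [|k IH] h.
  have eb : b = 0%N by lia.
  have ea : a = 0%N by lia.
  by rewrite /=.
case: (ltnP b k.+1) => h'.
  rewrite /= IH; last by lia.
  by rewrite /wc; have -> : (a <= k < b)%N = false by lia.
have ek : k.+1 = b by lia.
have h2 := T2 (leqnn L); rewrite wend /L subnK in h2; last by lia.
by rewrite ek h2 /z1 hb.
Qed.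

Lemma TN : traj A B wc N = (if (b < N)%N then x N else 0).
Proof.
case: ifP => hb; first by apply: T3 => //; lia.
have eb : b = N by lia.
have h := T2 (leqnn L); rewrite wend /L subnK in h; last by lia.
by rewrite -{1}eb h /z1 eb ltnn.
Qed.

Definition stg (v : nat -> 'cV[R]_m) k :=
  qform (Q k) (traj A B v k - theta k) + qform (Rw k) (v k).

Lemma sum_split (v : nat -> 'cV[R]_m) :
  \sum_(k < N) stg v k = \sum_(0 <= k < a) stg v k + \sum_(a <= k < b) stg v k
    + \sum_(b <= k < N) stg v k.
Proof.
rewrite -(big_mkord xpredT) (big_cat_nat (n := a)) //=; last by lia.
by rewrite (big_cat_nat (n := b) (m := a)) /= ?addrA //; lia.
Qed.

Lemma cost_diff :
  track_cost A B N Q Rw QN theta wc - track_cost A B N Q Rw QN theta u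
  = 2^-1 * (\sum_(a <= k < b) stg wc k - \sum_(a <= k < b) stg u k)
    + 2^-1 * (qform QN (traj A B wc N - theta N) - qform QN (x N - theta N)).
Proof.
rewrite /track_cost -/x.
rewrite -[\sum_(t < N) _]/(\sum_(k < N) stg wc k) -[\sum_(t < N) (qform (Q t) _ + _)]/(\sum_(k < N) stg u k).
rewrite !sum_split.
have e1 : \sum_(0 <= k < a) stg wc k = \sum_(0 <= k < a) stg u k.
  rewrite !big_nat; apply: eq_bigr => k hk.
  rewrite /stg T1; last by lia.
  by rewrite /wc; have -> : (a <= k < b)%N = false by lia.
have e3 : \sum_(b <= k < N) stg wc k = \sum_(b <= k < N) stg u k.
  rewrite !big_nat; apply: eq_bigr => k hk.
  rewrite /stg T3; [| lia | lia].
  by rewrite /wc; have -> : (a <= k < b)%N = false by lia.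
rewrite e1 e3; ring.
Qed.

Lemma win_sum :
  \sum_(a <= k < b) stg wc k =
  \sum_(j < L) (qform (Q (j + a)) (st A B z0 wv j - theta (j + a)) + qform (Rw (j + a)) (wv j)).
Proof.
rewrite -{1}[a]add0n big_addn big_mkord; apply: eq_bigr => j _.
rewrite /stg T2; last by have := ltn_ord j; rewrite /L; lia.
rewrite /wc; have -> : (a <= j + a < b)%N = true by have := ltn_ord j; rewrite /L; lia.
by rewrite addnK.
Qed.

End Win.


Lemma qform0 (R : rcfType) k (M : 'M[R]_k) : qform M 0 = 0.
Proof. by rewrite /qform mulmx0 mxE. Qed.

Lemma posdef_ge0 (R : rcfType) k (M : 'M[R]_k) v : posdef M -> 0 <= qform M v.
Proof.
move=> [_ h]; case: (eqVneq v 0) => [->|hv]; first by rewrite qform0.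
exact: ltW (h v hv).
Qed.

Lemma sum_recr (R : rcfType) (y : nat -> R) a b : (a <= b)%N ->
  \sum_(a <= k < b.+1) y k = \sum_(a <= k < b) y k + y b.
Proof. by move=> h; rewrite big_nat_recr. Qed.

Section Main.
Variable R : rcfType.
Variables n m : nat.
Variable A : 'M[R]_n.
Variable B : 'M[R]_(n, m).
Variables (mu_f mu_g l_f l_g thetabar : R) (Pbar Punder : 'M[R]_n).
Hypotheses (hc : controllable A B) (hmf : 0 < mu_f) (hmg : 0 < mu_g)
  (hlf : 0 < l_f) (hlg : 0 < l_g) (hPu : posdef Punder).

Definition Tb := thetabar ^+ 2.
Definition cP := 2^-1 * (1 + mc Pbar).
Definition Cz0 := n%:R * (4 * l_f * K1 A B + 2 * l_g * K2 A B).
Definition Cz1 := n%:R * (4 * l_f * K3 A B + 2 * l_g * K4 A B).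
Definition mu := Num.min (2^-1 * mu_f) mu_g.
Definition kap := 2 * (mc A + mc B).
Definition Cw := (1 + kap) * mu^-1 * (Cz0 + Cz1) + 1.
Definition Dw := (1 + kap) * mu^-1 * (2 * l_f * Tb + cP * Tb + mu_f * Tb).

Variables (N : nat) (Q : nat -> 'M[R]_n) (Rw : nat -> 'M[R]_m) (QN : 'M[R]_n)
  (theta : nat -> 'cV[R]_n) (u : nat -> 'cV[R]_m).
Hypotheses (hQ : forall t, (t < N)%N -> in_box (mu_f%:M) (l_f%:M) (Q t))
  (hR : forall t, (t < N)%N -> in_box (mu_g%:M) (l_g%:M) (Rw t))
  (hQN : in_box Punder Pbar QN)
  (hth : forall t, (t <= N)%N -> vnorm (theta t) <= thetabar)
  (hopt : optimal_input A B N Q Rw QN theta u).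

Let x := traj A B u.
Let y k := nrm2 (x k).
Let nu k := nrm2 (u k).

Lemma thT k : (k <= N)%N -> nrm2 (theta k) <= Tb.
Proof. by move=> h; apply: vnorm_sq; apply: hth. Qed.

Lemma mu_gt0 : 0 < mu.
Proof. by rewrite /mu lt_min hmg andbT mulr_gt0 // invr_gt0 ltr0n. Qed.

Lemma mu_le1 : mu <= 2^-1 * mu_f.
Proof. by rewrite /mu ge_min lexx. Qed.

Lemma mu_le2 : mu <= mu_g.
Proof. by rewrite /mu ge_min lexx orbT. Qed.

Lemma stg_lo k : (k < N)%N -> mu * (y k + nu k) - mu_f * Tb <= stg A B Q Rw theta u k.
Proof.
move=> hk; rewrite /stg.
have h1 := box_lo (x k - theta k) (hQ hk).
have h2 := box_lo (u k) (hR hk).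
have h3 := nrm2D (x k - theta k) (theta k); rewrite subrK in h3.
have h4 := thT (ltnW hk).
have hy : 0 <= y k by apply: nrm2_ge0.
have hn : 0 <= nu k by apply: nrm2_ge0.
have h5 : 0 <= (2^-1 * mu_f - mu) * y k by apply: mulr_ge0 => //; rewrite subr_ge0 mu_le1.
have h6 : 0 <= (mu_g - mu) * nu k by apply: mulr_ge0 => //; rewrite subr_ge0 mu_le2.
rewrite -/(y k) -/(nu k) in h3 h2 *.
have h7 := ler_wpM2l (ltW hmf) h3.
have h8 := ler_wpM2l (ltW hmf) h4. rewrite -/(x k). lra.
Qed.

Lemma cP_ge0 : 0 <= cP.
Proof. by rewrite /cP mulr_ge0 // ?invr_ge0 ?ler0n // addr_ge0 // mc_ge0. Qed.

Lemma Cz_ge0 : 0 <= Cz0 /\ 0 <= Cz1.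
Proof.
have [k1 [k2 [k3 k4]]] := K_ge0 A B.
by split; apply: mulr_ge0; rewrite ?ler0n //; apply: addr_ge0; apply: mulr_ge0 => //;
  apply: mulr_ge0; rewrite ?ler0n // ltW.
Qed.

Lemma Tb_ge0 : 0 <= Tb. Proof. exact: sqr_ge0. Qed.

Lemma kap_ge0 : 0 <= kap.
Proof. by rewrite /kap mulr_ge0 // addr_ge0 // mc_ge0. Qed.

Lemma Cw_ge1 : 1 <= Cw.
Proof.
rewrite /Cw lerDr; have [c0 c1] := Cz_ge0.
apply: mulr_ge0; last exact: addr_ge0.
apply: mulr_ge0; first by apply: addr_ge0 => //; apply: kap_ge0.
by rewrite invr_ge0 ltW // mu_gt0.
Qed.

Definition Gc := 2 * l_f * Tb + cP * Tb + mu_f * Tb.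

Lemma Gc_ge0 : 0 <= Gc.
Proof.
have h2 := Tb_ge0; have h1 := cP_ge0; rewrite /Gc.
have := mulr_ge0 (mulr_ge0 (ler0n R 2) (ltW hlf)) h2.
have := mulr_ge0 h1 h2. have := mulr_ge0 (ltW hmf) h2. lra.
Qed.

Lemma Dw_ge0 : 0 <= Dw.
Proof.
rewrite /Dw -/Gc; apply: mulr_ge0; last exact: Gc_ge0.
apply: mulr_ge0; first by apply: addr_ge0 => //; apply: kap_ge0.
by rewrite invr_ge0 ltW // mu_gt0.
Qed.

Lemma CwDw p q : Cw * p + Dw * q = (1 + kap) * (mu^-1 * ((Cz0 + Cz1) * p + Gc * q)) + p.
Proof. rewrite /Cw /Dw /Gc; ring. Qed.

Lemma win_main a b : (a <= b <= N)%N -> ((n <= b - a)%N \/ (a = 0%N /\ b = N)) ->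
  \sum_(a <= k < b.+1) y k <= Cw * (y a + (if (b < N)%N then y b else 0)) + Dw * ((b - a).+1)%:R.
Proof.
move=> hab hcond.
have hyk : forall k, 0 <= y k by move=> k; apply: nrm2_ge0.
have hnk : forall k, 0 <= nu k by move=> k; apply: nrm2_ge0.
set L := (b - a)%N.
set z1 := if (b < N)%N then x b else 0.
set n1 := nrm2 z1.
have hn1 : 0 <= n1 by apply: nrm2_ge0.
have cd := cost_diff Q Rw QN theta u hab hcond hc.
have ho := hopt (wc A B N u a b).
set Sw := \sum_(a <= k < b) stg A B Q Rw theta (wc A B N u a b) k in cd.
set Su := \sum_(a <= k < b) stg A B Q Rw theta u k in cd.
set tw := qform QN (traj A B (wc A B N u a b) N - theta N) in cd.
set tu := qform QN (traj A B u N - theta N) in cd.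
have h1 : Su <= Sw + (tw - tu).
  have : 0 <= track_cost A B N Q Rw QN theta (wc A B N u a b) - track_cost A B N Q Rw QN theta u.
    by rewrite subr_ge0.
  rewrite cd; lra.
have htw : tw - tu <= cP * Tb.
  have htu : 0 <= tu.
    case: hQN => _ [hlo _]; apply: le_trans (hlo _); exact: posdef_ge0.
  have hcp := mulr_ge0 cP_ge0 Tb_ge0.
  rewrite /tw (TN u hab hcond hc); case: ifP => hb; first by rewrite -/tu; lra.
  rewrite sub0r.
  case: hQN => _ [_ hhi]; have := hhi (- theta N).
  have := qform_le Pbar (- theta N); rewrite nrm2N -/cP.
  have := ler_wpM2l cP_ge0 (thT (leqnn N)). lra.
have hSw : Sw <= Cz0 * y a + Cz1 * n1 + L%:R * (2 * l_f * Tb).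
  rewrite /Sw (win_sum A B Q Rw theta u hab hcond) /wv.
  have hwc := win_cost hc (L := (b - a)%N) (traj A B u a) z1
     (Qs := fun j => Q (j + a)) (Rs := fun j => Rw (j + a))
     (th := fun j => theta (j + a)) (T := Tb) (ltW hlf) (ltW hlg).
  apply: le_trans (hwc _ _ _) _.
  - move=> j hj v; apply: box_hi; apply: hQ; lia.
  - move=> j hj v; apply: box_hi; apply: hR; lia.
  - move=> j hj; apply: thT; lia.
  by rewrite /Cz0 /Cz1 -/L -/n1.
set S := \sum_(a <= k < b) (y k + nu k).
have hSu : mu * S - L%:R * (mu_f * Tb) <= Su.
  have : \sum_(a <= k < b) (mu * (y k + nu k) - mu_f * Tb) <= Su.
    rewrite /Su big_nat [X in _ <= X]big_nat; apply: ler_sum => k hk.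
    apply: stg_lo; lia.
  by rewrite sumrB -mulr_sumr sumr_const_nat -/L -/S mulr_natl.
have hS : S <= mu^-1 * ((Cz0 + Cz1) * (y a + n1) + Gc * (L.+1)%:R).
  have hm := mu_gt0.
  rewrite -(ler_pM2l hm) mulrA mulfV ?gt_eqF // mul1r.
  have [c0 c1] := Cz_ge0.
  have := mulr_ge0 c1 (hyk a); have := mulr_ge0 c0 hn1.
  have hT := Tb_ge0; have hcp := cP_ge0.
  have := mulr_ge0 (mulr_ge0 hcp hT) (ler0n R L).
  have : 0 <= 2 * l_f * Tb + mu_f * Tb.
    by apply: addr_ge0; apply: mulr_ge0 => //; rewrite ?mulr_ge0 // ltW.
  have -> : ((L.+1)%:R : R) = L%:R + 1 by rewrite -natr1.
  rewrite /Gc. lra.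
set W := mu^-1 * _ in hS.
have hW0 : 0 <= W.
  rewrite /W; apply: mulr_ge0; first by rewrite invr_ge0 ltW // mu_gt0.
  have [c0 c1] := Cz_ge0; apply: addr_ge0.
    by apply: mulr_ge0; apply: addr_ge0.
  by apply: mulr_ge0; [exact: Gc_ge0 | exact: ler0n].
have hSy : \sum_(a <= k < b) y k <= S.
  rewrite /S !big_nat; apply: ler_sum => k _; rewrite lerDl; exact: hnk.
rewrite sum_recr; last by case/andP: hab.
rewrite CwDw -/L.
have hk := kap_ge0.
case: ifP => hb.
  have e : n1 = y b by rewrite /n1 /z1 hb.
  rewrite -e -/W. have := mulr_ge0 hk hW0. have := hyk a. lra.
have eb : b = N.
  by move: hab hb => /andP[_ hbN] /negbT; rewrite -leqNgt => hNb; apply/eqP; rewrite eqn_leq hbN hNb.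
have e : n1 = 0 by rewrite /n1 /z1 hb nrm20.
have eW : mu^-1 * ((Cz0 + Cz1) * (y a + 0) + Gc * (L.+1)%:R) = W by rewrite /W e.
rewrite eW.
case: (posnP L) => hL.
  have ea : a = b by move: hab hL; rewrite /L; clear; lia.
  rewrite -ea big_geq // add0r addr0.
  have := mulr_ge0 (addr_ge0 ler01 hk) hW0. lra.
have hyN : y b <= kap * S.
  have eN : b = (b.-1).+1 by move: hab hL; rewrite /L; clear; lia.
  have hone : y b.-1 + nu b.-1 <= S.
    apply: one_le_sum => //; [move=> k; apply: addr_ge0; [exact: hyk | exact: hnk] | move: hab hL; rewrite /L; clear; lia].
  have hx : x b = A *m x b.-1 + B *m u b.-1.
    by rewrite /x; move: eN; clear; move=> ->.
  rewrite /y hx.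
  apply: le_trans (nrm2D _ _) _.
  have := nrm2_mul A (x b.-1); have := nrm2_mul B (u b.-1).
  rewrite -/(y b.-1) -/(nu b.-1).
  have := mc_ge0 A; have := mc_ge0 B; have := hyk b.-1; have := hnk b.-1.
  have := ler_wpM2l hk hone. rewrite /kap.
  have := mulr_ge0 (mc_ge0 A) (hnk b.-1); have := mulr_ge0 (mc_ge0 B) (hyk b.-1).
  lra.
have := mulr_ge0 hk hW0. have := hyk a. have := ler_wpM2l hk hS. lra.
Qed.

End Main.

Unset Implicit Arguments. Set Strict Implicit.

Theorem lemma7 (R : rcfType) (n m : nat) (A : 'M[R]_n) (B : 'M[R]_(n, m))
    (mu_f mu_g l_f l_g thetabar : R) (Pbar Punder : 'M[R]_n) :
  controllable A B ->
  0 < mu_f -> 0 < mu_g -> 0 < l_f -> 0 < l_g ->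
  DARE_pd_sol A B (l_f%:M) (l_g%:M) Pbar ->
  DARE_pd_sol A B (mu_f%:M) (mu_g%:M) Punder ->
  exists xbar : R,
    forall (N : nat) (Q : nat -> 'M[R]_n) (Rw : nat -> 'M[R]_m) (QN : 'M[R]_n)
           (theta : nat -> 'cV[R]_n) (u : nat -> 'cV[R]_m),
      (forall t, (t < N)%N -> in_box (mu_f%:M) (l_f%:M) (Q t)) ->
      (forall t, (t < N)%N -> in_box (mu_g%:M) (l_g%:M) (Rw t)) ->
      in_box Punder Pbar QN ->
      (forall t, (t <= N)%N -> vnorm (theta t) <= thetabar) ->
      optimal_input A B N Q Rw QN theta u ->
      forall t, (t <= N)%N -> vnorm (traj A B u t) <= xbar.
Proof.
move=> hc hmf hmg hlf hlg _ [hPu _].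
set C := Cw A B mu_f mu_g l_f l_g.
set D := Dw A B mu_f mu_g l_f thetabar Pbar.
exists (Num.sqrt (D * C * ((n.*2 + 4)%:R))).
move=> N Q Rw QN theta u hQ hR hQN hth hopt t ht.
apply: vnorm_le.
apply: (hole_bound (y := fun k => nrm2 (traj A B u k)) (N := N) (n := n) (C := C) (D := D)) => //.
- exact: (Cw_ge1 A B hmf hmg hlf hlg).
- exact: (Dw_ge0 A B thetabar Pbar hmf hmg hlf).
- by move=> k; apply: nrm2_ge0.
- by rewrite /= nrm20.
- move=> a b hab hcond.
  exact: (win_main hc hmf hmg hlf hlg hPu hQ hR hQN hth hopt hab hcond).
Qed.
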